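(* For every cubic graph $G$ that contains a perfect matching, $\nu_2(G) \geq \frac{20}{21}\cdot \frac{|V(G)| + 2\cdot \nu_3(G)}{4}$.
   Context: Graphs are finite, without loops, possibly with multiple edges; a graph is cubic if every vertex has degree $3$. For $k\geq 1$, $\nu_k(G)$ is the maximum number of edges of a $k$-edge-colorable subgraph of $G$. *)

(* Defs.v *)
(* A finite loopless multigraph is given by a finite vertex
   type V, a finite edge type E and endpoint maps src tgt : E -> V
   (multiple edges = distinct edges with the same endpoints). *)
From mathcomp Require Import all_boot all_order all_algebra.
Set Implicit Arguments. Unset Strict Implicit. Unset Printing Implicit Defensive.

Section Graphs.
Variables (V E : finType) (src tgt : E -> V).

Definition incident (e : E) (v : V) : bool := (src e == v) || (tgt e == v).

Definition loopless : Prop := forall e : E, src e != tgt e.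

Definition deg (v : V) : nat := #|[set e : E | incident e v]|.

Definition cubic : Prop := forall v : V, deg v = 3.

Definition adjacent (e f : E) : bool :=
  (e != f) && [exists v : V, incident e v && incident f v].

Definition perfect_matching (M : {set E}) : Prop :=
  forall v : V, #|[set e in M | incident e v]| = 1.

Definition has_perfect_matching : Prop := exists M : {set E}, perfect_matching M.

Definition k_edge_colorable (k : nat) (F : {set E}) : bool :=
  [exists c : {ffun E -> 'I_k},
     [forall e in F, forall f in F, adjacent e f ==> (c e != c f)]].

Definition nu (k : nat) : nat :=
  \max_(F : {set E} | k_edge_colorable k F) #|F|.

End Graphs.

(* Main.v *)
Require Import Defs.
From mathcomp Require Import all_boot all_order all_algebra.
From mathcomp Require Import zify.
Set Implicit Arguments. Unset Strict Implicit. Unset Printing Implicit Defensive.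

Lemma card_sep (T : finType) (A : {set T}) (P : pred T) :
  #|[set e in A | P e]| = \sum_(e in A) (P e : nat).
Proof.
rewrite -sum1_card big_mkcond [RHS]big_mkcond /=; apply: eq_bigr => e _.
by rewrite inE; case: (e \in A); case: (P e).
Qed.

Lemma sum_eq1 (T : finType) (a : T) : \sum_(v : T) ((a == v) : nat) = 1.
Proof.
rewrite (bigD1 a) //= eqxx big1 // => v /negbTE; rewrite eq_sym => -> //.
Qed.

Lemma I3 (x y i j : 'I_3) : j != i -> x != i -> y != i -> x != y -> (x == j) != (y == j).
Proof.
by case: x y i j => [[|[|[|x]]] Hx] [[|[|[|y]]] Hy] [[|[|[|i]]] Hi] [[|[|[|j]]] Hj].
Qed.

Lemma nu_ge (V E : finType) (src tgt : E -> V) k (F : {set E}) :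
  k_edge_colorable src tgt k F -> #|F| <= nu src tgt k.
Proof. by move=> h; rewrite /nu; exact: (@leq_bigmax_cond _ (k_edge_colorable src tgt k) (fun F => #|F|) F h). Qed.

Lemma nu_attain (V E : finType) (src tgt : E -> V) k :
  exists2 F, k_edge_colorable src tgt k.+1 F & #|F| = nu src tgt k.+1.
Proof.
have h0 : k_edge_colorable src tgt k.+1 set0.
  apply/existsP; exists [ffun _ => ord0]; apply/forallP => e; apply/implyP.
  by rewrite inE.
have hp : 0 < #|(fun F => k_edge_colorable src tgt k.+1 F)|.
  by apply/card_gt0P; exists set0.
have [F0 H0 E0] := @eq_bigmax_cond _ (fun F => k_edge_colorable src tgt k.+1 F)
   (fun F : {set E} => #|F|) hp.
by exists F0 => //; rewrite -E0.
Qed.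

Lemma partB (V E : finType) (src tgt : E -> V) :
  2 * nu src tgt 3 <= 3 * nu src tgt 2.
Proof.
have [F3 /existsP [c /forallP Hc] <-] := nu_attain src tgt 2.
pose C i := [set e in F3 | c e == i].
pose D i := [set e in F3 | c e != i].
have hD : forall i, #|D i| <= nu src tgt 2.
  move=> i; apply: nu_ge.
  have [j ji] : exists j : 'I_3, j != i.
    exists (if i == ord0 then inord 1 else ord0).
    have [->|h] := eqVneq i ord0; last by rewrite eq_sym.
    by apply/eqP => /(congr1 val); rewrite /= inordK.
  apply/existsP; exists [ffun e => if c e == j then ord0 else (ord_max : 'I_2)].
  apply/forallP => e; apply/implyP; rewrite inE => /andP [eF ei].
  apply/forallP => f; apply/implyP; rewrite inE => /andP [fF fi].
  apply/implyP => ad.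
  have := implyP (forallP (implyP (Hc e) eF) f) fF; rewrite ad /= => cef.
  have := I3 ji ei fi cef; rewrite !ffunE.
  by case: (c e == j); case: (c f == j).
have hCD : forall i, #|C i| + #|D i| = #|F3|.
  move=> i; rewrite !card_sep -big_split /= -sum1_card; apply: eq_bigr => e _.
  by case: (c e == i).
have hC : \sum_(i : 'I_3) #|C i| = #|F3|.
  under eq_bigr => i _ do rewrite card_sep.
  rewrite exchange_big /= -sum1_card; apply: eq_bigr => e _; exact: sum_eq1.
have hS : \sum_(i : 'I_3) #|D i| <= \sum_(i : 'I_3) nu src tgt 2 by apply: leq_sum.
rewrite sum_nat_const card_ord /= in hS.
have : \sum_(i : 'I_3) (#|C i| + #|D i|) = 3 * #|F3|.
  by under eq_bigr => i _ do rewrite hCD; rewrite sum_nat_const card_ord.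
rewrite big_split /= hC => h; lia.
Qed.

Lemma sum_inc (V E : finType) (src tgt : E -> V) (A : {set E}) :
  loopless src tgt ->
  \sum_(v : V) #|[set e in A | incident src tgt e v]| = 2 * #|A|.
Proof.
move=> ll.
under eq_bigr => v _ do rewrite card_sep.
rewrite exchange_big /= -sum1_card big_distrr /=; apply: eq_bigr => e _.
rewrite muln1.
transitivity (\sum_(v : V) (((src e == v) : nat) + (tgt e == v))).
  apply: eq_bigr => v _; rewrite /incident.
  case: eqP => [<-|]; case: eqP => // h; by have := ll e; rewrite h eqxx.
by rewrite big_split /= !sum_eq1.
Qed.

Lemma partA (V E : finType) (src tgt : E -> V) :
  loopless src tgt -> cubic src tgt -> has_perfect_matching src tgt ->
  5 * #|V| <= 6 * nu src tgt 2.
Proof.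
move=> ll cub [M PM].
have hM : 2 * #|M| = #|V|.
  rewrite -(sum_inc M ll) -sum1_card; apply: eq_bigr => v _; exact: PM.
have hE : 2 * #|E| = 3 * #|V|.
  rewrite -cardsT -(sum_inc _ ll).
  transitivity (\sum_(v : V) 3); last by rewrite sum_nat_const mulnC.
  apply: eq_bigr => v _.
  rewrite -(cub v) /deg; apply: eq_card => e; by rewrite !inE.
have hF : #|~: M| = #|V|.
  have := cardsCs (~: M); rewrite setCK; lia.
have degF : forall v, #|[set f in ~: M | incident src tgt f v]| = 2.
  move=> v; have := cardsID M [set e | incident src tgt e v].
  rewrite (_ : _ :&: M = [set e in M | incident src tgt e v]); last first.
    by apply/setP => e; rewrite !inE andbC.
  rewrite (_ : _ :\: M = [set e in ~: M | incident src tgt e v]); last first.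
    by apply/setP => e; rewrite !inE andbC.
  rewrite PM -/(deg src tgt v) cub; lia.
have Muniq : forall e f v, e \in M -> f \in M -> incident src tgt e v ->
    incident src tgt f v -> e = f.
  move=> e f v eM fM ev fv; have /eqP := PM v; case/cards1P => x hx.
  have : e \in [set e in M | incident src tgt e v] by rewrite inE eM ev.
  have : f \in [set e in M | incident src tgt e v] by rewrite inE fM fv.
  by rewrite hx !inE => /eqP -> /eqP ->.
pose mF (N : {set E}) := (N \subset ~: M) &&
   [forall e in N, forall f in N, ~~ adjacent src tgt e f].
have mF0 : mF set0 by rewrite /mF sub0set; apply/forall_inP => e; rewrite inE.
case: (@arg_maxnP _ set0 mF (fun N : {set E} => #|N|) mF0).
move=> N /andP [NF /forall_inP Nm] Nmax.
pose P (e f : E) := incident src tgt f (src e) || incident src tgt f (tgt e).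
have cover : forall f, f \in ~: M -> exists2 e, e \in N & P e f.
  move=> f fF; case fN: (f \in N).
    by exists f => //; rewrite /P /incident eqxx.
  case: (boolP [exists e in N, P e f]) => [/exists_inP // | /negP hn].
  suff : mF (f |: N).
    by move/Nmax; rewrite cardsU1 fN; lia.
  rewrite /mF subUset sub1set fF NF /=.
  have nadj : forall e, e \in N -> ~~ adjacent src tgt f e.
    move=> e eN; apply/negP => /andP [_ /existsP [v /andP [fv ev]]].
    apply: hn; apply/exists_inP; exists e => //; rewrite /P.
    by case/orP: ev => /eqP ->; rewrite fv ?orbT.
  apply/forall_inP => e; rewrite !inE => /orP [/eqP->|eN];
  apply/forall_inP => g; rewrite !inE => /orP [/eqP->|gN].
  - by rewrite /adjacent eqxx.
  - exact: nadj.
  - apply/negP => /andP [ne /existsP [v /andP [a b]]].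
    by move/negP: (nadj e eN); apply; rewrite /adjacent eq_sym ne; apply/existsP; exists v; rewrite a b.
  - exact: (forall_inP (Nm e eN) g gN).
have SN : forall e, e \in N -> #|[set f in ~: M | P e f]| <= 3.
  move=> e eN.
  have -> : [set f in ~: M | P e f] =
     [set f in ~: M | incident src tgt f (src e)] :|:
     [set f in ~: M | incident src tgt f (tgt e)].
    by apply/setP => f; rewrite !inE /P -andb_orr.
  have := cardsUI [set f in ~: M | incident src tgt f (src e)]
     [set f in ~: M | incident src tgt f (tgt e)].
  rewrite !degF.
  have : e \in [set f in ~: M | incident src tgt f (src e)] :&:
     [set f in ~: M | incident src tgt f (tgt e)].
    have := subsetP NF e eN; rewrite !inE => ->.
    by rewrite /incident !eqxx orbT.
  move=> eI hU; have : 0 < #|[set f in ~: M | incident src tgt f (src e)] :&: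
     [set f in ~: M | incident src tgt f (tgt e)]| by apply/card_gt0P; exists e.
  lia.
have h3 : #|~: M| <= 3 * #|N|.
  rewrite -sum1_card.
  apply: (@leq_trans (\sum_(f in ~: M) \sum_(e in N) (P e f : nat))).
    apply: leq_sum => f fF; have [e eN Pef] := cover f fF.
    by rewrite (bigD1 e) //= Pef.
  rewrite exchange_big /= mulnC -sum_nat_const; apply: leq_sum => e eN.
  by rewrite -card_sep; exact: SN.
have hMN : #|M :|: N| = #|M| + #|N|.
  rewrite cardsU; suff -> : M :&: N = set0 by rewrite cards0 subn0.
  apply/setP => e; rewrite !inE; apply/negP => /andP [eM eN].
  by have := subsetP NF e eN; rewrite inE eM.
have col : k_edge_colorable src tgt 2 (M :|: N).
  apply/existsP; exists [ffun e => if e \in M then ord0 else (ord_max : 'I_2)].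
  apply/forall_inP => e eMN; apply/forall_inP => f fMN; apply/implyP => ad.
  rewrite !ffunE.
  case eM: (e \in M); case fM: (f \in M) => //.
  - case/andP: ad => ne /existsP [v /andP [a b]].
    by rewrite (Muniq e f v eM fM a b) eqxx in ne.
  - have eN : e \in N by move: eMN; rewrite inE eM.
    have fN : f \in N by move: fMN; rewrite inE fM.
    by have := forall_inP (Nm e eN) f fN; rewrite ad.
have := nu_ge col; rewrite hMN; lia.
Qed.

From mathcomp Require Import lra.
Import GRing.Theory Num.Theory.
Local Open Scope ring_scope.

Theorem theorem5 (V E : finType) (src tgt : E -> V) :
  loopless src tgt -> cubic src tgt -> has_perfect_matching src tgt ->
  (nu src tgt 2)%:R >=
    (20%:R / 21%:R : rat) * (((#|V| + 2 * nu src tgt 3)%N)%:R / 4%:R).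
Proof.
move=> ll cub pm.
have hA := partA ll cub pm; have hB := partB src tgt.
move: (nu src tgt 2) (nu src tgt 3) #|V| hA hB => a b n hA hB.
have hA' : (5%:R * n%:R <= 6%:R * a%:R :> rat) by rewrite -!natrM ler_nat.
have hB' : (2%:R * b%:R <= 3%:R * a%:R :> rat) by rewrite -!natrM ler_nat.
rewrite natrD natrM.
lra.
Qed.
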